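(* Let $G$ be a connected graph with vertex set $\{u_1,\dots,u_n\}$, $n\ge2$, having no pair of distinct true twins, and let $\mathcal{H}=\{H_1,\dots,H_n\}$ be a family of non-empty graphs, $H_i$ of order $n_i$. Then $\dim_l(G\circ\mathcal{H})=\sum_{i=1}^n n_i-n$ if and only if $H_i\cong K_{n_i}$ for all $i$.
   Context: All graphs are finite and simple; non-empty means having at least one edge. True twins: distinct vertices $x,y$ with $N[x]=N[y]$. For a connected graph $G$, $\dim_l(G)$ is the minimum size of $S\subseteq V(G)$ such that for every two adjacent vertices $x,y$ there is $s\in S$ with $d_G(s,x)\ne d_G(s,y)$ ($d_G$ the shortest-path distance). Lexicographic product $G\circ\mathcal{H}$: vertex set $\bigcup_i\{u_i\}\times V(H_i)$, $(u_i,v)\sim(u_j,w)$ iff $u_iu_j\in E(G)$, or $i=j$ and $vw\in E(H_i)$. *)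

(* Defs.v *)
From mathcomp Require Import all_boot.
Set Implicit Arguments. Unset Strict Implicit. Unset Printing Implicit Defensive.

Definition simple_graph (T : finType) (e : rel T) : Prop :=
  symmetric e /\ irreflexive e.

Definition nonempty_graph (T : finType) (e : rel T) : Prop :=
  exists x y, e x y.

Definition connected_graph (T : finType) (e : rel T) : Prop :=
  forall x y, connect e x y.

Definition cnbhd (T : finType) (e : rel T) (x : T) : {set T} :=
  x |: [set y | e x y].

Definition no_true_twins (T : finType) (e : rel T) : Prop :=
  forall x y, x != y -> cnbhd e x != cnbhd e y.

Definition walk_of_len (T : finType) (e : rel T) (x y : T) (k : nat) : bool :=
  [exists p : k.-tuple T, path e x p && (last x p == y)].

(* shortest-path distance: least k (< #|T|) with a walk of length k from x
   to y; in a connected graph this is the usual distance d_G(x,y). *)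
Definition dist (T : finType) (e : rel T) (x y : T) : nat :=
  find (walk_of_len e x y) (iota 0 #|T|).

Definition local_resolving (T : finType) (e : rel T) (S : {set T}) : bool :=
  [forall x, forall y, e x y ==> [exists s in S, dist e s x != dist e s y]].

Definition ldim (T : finType) (e : rel T) : nat :=
  \big[minn/#|T|]_(S : {set T} | local_resolving e S) #|S|.

Definition lexprod (V : finType) (e : rel V) (T : V -> finType)
  (f : forall i, rel (T i)) : rel {i : V & T i} :=
  fun u v => e (tag u) (tag v) ||
             ((tag u == tag v) && f (tag u) (tagged u) (tagged_as u v)).

Definition complete (n : nat) : rel 'I_n := fun x y => x != y.

Definition graph_iso (T1 T2 : finType) (e1 : rel T1) (e2 : rel T2) : Prop :=
  exists h : T1 -> T2, bijective h /\ forall x y, e2 (h x) (h y) = e1 x y.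

(* Main.v *)
Require Import Defs.
From mathcomp Require Import all_boot zify.
Set Implicit Arguments. Unset Strict Implicit. Unset Printing Implicit Defensive.

Section Gen.
Variables (W : finType) (E : rel W).

Lemma wl0 x y : walk_of_len E x y 0 = (x == y).
Proof.
rewrite /walk_of_len; apply/idP/idP => [/existsP[p]|/eqP->]; last by apply/existsP; exists [tuple]; rewrite /= eqxx.
by rewrite (tuple0 p) /= => /eqP ->.
Qed.

Lemma wl1 x y : walk_of_len E x y 1 = E x y.
Proof.
rewrite /walk_of_len; apply/idP/idP => [/existsP[[[|z [|w s]] //= _]]|h]; last by apply/existsP; exists [tuple y]; rewrite /= h eqxx.
by rewrite andbT => /andP[h /eqP <-].
Qed.

Lemma distE x y : 1 < #|W| -> exists k,
  dist E x y = if x == y then 0 else if E x y then 1 else k.+2.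
Proof.
rewrite /dist; case: #|W| => [|[|n]] //= _.
exists (find (walk_of_len E x y) (iota 2 n)).
by rewrite wl0 wl1; case: (x == y) => //; case: (E x y).
Qed.

Definition sw (x y : W) u := if u == x then y else if u == y then x else u.

Lemma walk_sw x y a b k : (forall u v, E (sw x y u) (sw x y v) = E u v) ->
  walk_of_len E a b k -> walk_of_len E (sw x y a) (sw x y b) k.
Proof.
move=> H /existsP[p /andP[hp /eqP hl]]; apply/existsP; exists (map_tuple (sw x y) p).
rewrite /= path_map last_map hl eqxx andbT.
by rewrite (@eq_path _ _ E) // => u v; rewrite /relpre /= H.
Qed.

Lemma dist_twin x y s : (forall u v, E (sw x y u) (sw x y v) = E u v) ->
  s != x -> s != y -> x != y -> dist E s x = dist E s y.
Proof.
move=> H sx sy xy; rewrite /dist; apply: eq_find => k.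
have ss : sw x y s = s by rewrite /sw (negbTE sx) (negbTE sy).
have sxy : sw x y x = y by rewrite /sw eqxx.
have syx : sw x y y = x by rewrite /sw eqxx eq_sym (negbTE xy).
rewrite /walk_of_len; apply/idP/idP => /(walk_sw H); by rewrite ?ss ?sxy ?syx.
Qed.

Lemma sw_auto x y : symmetric E -> irreflexive E -> x != y ->
  (forall w, w != x -> w != y -> E w x = E w y) ->
  forall u v, E (sw x y u) (sw x y v) = E u v.
Proof.
move=> sE iE xy H u v; rewrite /sw.
have yx : y != x by rewrite eq_sym.
have H' w : w != x -> w != y -> E x w = E y w by move=> *; rewrite sE H // sE.
case: (eqVneq u x) => [->|ux]; case: (eqVneq v x) => [->|vx];
  rewrite ?eqxx ?(negbTE yx) ?iE //; try by rewrite sE.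
- case: (eqVneq v y) => [->|vy]; first by rewrite sE.
  by rewrite H'.
- case: (eqVneq u y) => [->|uy]; first by rewrite sE.
  by rewrite H.
- case: (eqVneq u y) => [->|uy]; case: (eqVneq v y) => [->|vy];
    rewrite ?iE //.
  + by rewrite H'.
  + by rewrite H.
Qed.
End Gen.
Unset Implicit Arguments.

Section Lex.
Variables (V : finType) (e : rel V) (T : V -> finType) (f : forall i, rel (T i)).
Local Notation W := {i : V & T i}.
Local Notation L := (@lexprod V e T f).

Lemma Lsame i (a b : T i) : L (Tagged T a) (Tagged T b) = e i i || f i a b.
Proof. by rewrite /lexprod /= eqxx tagged_asE. Qed.

Lemma Ldiff u v : tag u != tag v -> L u v = e (tag u) (tag v).
Proof. by move=> h; rewrite /lexprod (negbTE h) orbF. Qed.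

Lemma TaggedE i (a b : T i) : (Tagged T a == Tagged T b) = (a == b).
Proof. by rewrite eq_Tagged. Qed.

Lemma Lsym : symmetric e -> (forall i, symmetric (f i)) -> symmetric L.
Proof.
move=> se sf [i a] [j b]; case: (eqVneq i j) => [eij|nij].
  by subst j; rewrite !Lsame sf.
by rewrite !Ldiff //= eq_sym.
Qed.

Lemma Lirr : irreflexive e -> (forall i, irreflexive (f i)) -> irreflexive L.
Proof. by move=> ie iF [i a]; rewrite Lsame ie iF. Qed.

Lemma cardW : #|{: W}| = \sum_i #|T i|.
Proof. by rewrite card_tagged sumnE big_map big_enum. Qed.

Lemma card_split (S : {set W}) :
  #|S| = \sum_i #|[set c : T i | Tagged T c \in S]|.
Proof.
rewrite -sum1_card.
have -> : \sum_i #|[set c : T i | Tagged T c \in S]| =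
  \sum_i \sum_(c in [set c : T i | Tagged T c \in S]) 1.
  by apply: eq_bigr => i _; rewrite sum1_card.
rewrite (@sig_big_dep nat 0 addn V T predT
  (fun i c => c \in [set c : T i | Tagged T c \in S]) (fun i c => 1)).
by apply: eq_bigl => -[i c]; rewrite /= inE.
Qed.

Lemma resolving_of (S : {set W}) :
  symmetric e -> irreflexive e -> no_true_twins e ->
  (forall i, symmetric (f i)) -> (forall i, irreflexive (f i)) ->
  (forall u v, u \notin S -> v \notin S -> L u v -> tag u != tag v) ->
  (forall k, exists c : T k, Tagged T c \in S) -> local_resolving L S.
Proof.
move=> se ie tw sf iF H1 H2; apply/forallP => x; apply/forallP => y; apply/implyP => hxy.
have xy : x != y by apply: contraTneq hxy => ->; rewrite Lirr.
have c2 : 1 < #|{: W}|.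
  by apply: (leq_trans _ (max_card [set x; y])); rewrite cards2 xy.
case xS: (x \in S).
  apply/existsP; exists x; rewrite xS /=.
  have [k1 ->] := distE L x x c2; have [k2 ->] := distE L x y c2.
  by rewrite eqxx (negbTE xy); case: (L x y).
case yS: (y \in S).
  apply/existsP; exists y; rewrite yS /=.
  have [k1 ->] := distE L y x c2; have [k2 ->] := distE L y y c2.
  have yx : y != x by rewrite eq_sym.
  by rewrite eqxx (negbTE yx); case: (L y x).
have tn := H1 x y (negbT xS) (negbT yS) hxy.
have eij : e (tag x) (tag y) by rewrite -Ldiff.
case: (pickP (fun k => (k \in cnbhd e (tag x)) != (k \in cnbhd e (tag y)))) => [k hk | hn]; last first.
  have : cnbhd e (tag x) = cnbhd e (tag y).
    by apply/setP => k; move: (hn k) => /negbFE/eqP.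
  by move/eqP; rewrite (negbTE (tw _ _ tn)).
rewrite /cnbhd !inE in hk.
have kx : k != tag x.
  by apply/negP => /eqP ek; move: hk; rewrite ek eqxx se eij orbT.
have ky : k != tag y.
  by apply/negP => /eqP ek; move: hk; rewrite ek eqxx eij orbT.
rewrite (negbTE kx) (negbTE ky) /= in hk.
have [c cS] := H2 k.
apply/existsP; exists (Tagged T c); rewrite cS /=.
have [k1 ->] := distE L (Tagged T c) x c2; have [k2 ->] := distE L (Tagged T c) y c2.
have nx : Tagged T c != x by apply/negP => /eqP hx; move: kx; rewrite -hx eqxx.
have ny : Tagged T c != y by apply/negP => /eqP hx; move: ky; rewrite -hx eqxx.
rewrite (negbTE nx) (negbTE ny) !Ldiff //= ![e k _]se.
by move: hk; case: (e (tag x) k); case: (e (tag y) k).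
Qed.

Lemma ldim_le (S : {set W}) : local_resolving L S -> ldim L <= #|S|.
Proof.
move=> h; rewrite /ldim -big_filter.
have: S \in [seq S <- index_enum {set W} | local_resolving L S].
  by rewrite mem_filter h mem_index_enum.
elim: [seq _ <- _ | _] => //= a r IH; rewrite in_cons big_cons => /orP[/eqP<-|hr].
  exact: geq_minl.
exact: leq_trans (geq_minr _ _) (IH hr).
Qed.

Lemma ldim_ge B : B <= #|{: W}| -> (forall S : {set W}, local_resolving L S -> B <= #|S|) ->
  B <= ldim L.
Proof.
move=> h1 h2; rewrite /ldim; elim/big_ind: _ => //.
by move=> a b ha hb; rewrite leq_min ha hb.
Qed.

End Lex.

Lemma Tneq (V : finType) (T : V -> finType) j (a : T j) i (c : T i) :
  j != i -> Tagged T a != Tagged T c.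
Proof. by move=> h; apply/negP => /eqP/(congr1 tag) /= hj; rewrite hj eqxx in h. Qed.

Arguments Tneq {V T j} a {i} c.

Theorem theorem4 (V : finType) (e : rel V) (T : V -> finType)
    (f : forall i : V, rel (T i)) :
  simple_graph e ->
  connected_graph e ->
  1 < #|V| ->
  no_true_twins e ->
  (forall i, simple_graph (f i)) ->
  (forall i, nonempty_graph (f i)) ->
  (ldim (@lexprod V e T f) = \sum_(i : V) #|T i| - #|V| <->
   forall i, graph_iso (f i) (@complete #|T i|)).
Proof.
move=> [se ie] conn n2 tw sfi nef.
have sf i : symmetric (f i) by case: (sfi i).
have iF i : irreflexive (f i) by case: (sfi i).
have ex0 i : exists x : T i, true by case: (nef i) => a [b _]; exists a.
pose x0 i := xchoose (ex0 i).
have n2i i : 1 < #|T i|.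
  case: (nef i) => a [b h]; have ab : a != b by apply: contraTneq h => ->; rewrite iF.
  by apply: (leq_trans _ (max_card [set a; b])); rewrite cards2 ab.
have other i : exists c : T i, c != x0 i.
  case: (nef i) => a [b h]; have ab : a != b by apply: contraTneq h => ->; rewrite iF.
  case: (eqVneq a (x0 i)) => [ea|na]; last by exists a.
  by exists b; rewrite -ea eq_sym.
pose N := \sum_i (#|T i|).-1.
have eqN : \sum_i #|T i| - #|V| = N.
  have -> : \sum_i #|T i| = N + #|V|.
    rewrite -sum1_card -big_split; apply: eq_bigr => i _.
    by rewrite /= addn1 prednK // ltnW.
  by rewrite addnK.
rewrite eqN.
pose L := @lexprod V e T f.
pose S1 := [set v : {i : V & T i} | tagged v != x0 (tag v)].
have hS1 : local_resolving L S1.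
  apply: resolving_of => //.
    move=> [i a] [j b]; rewrite !inE /= !negbK => /eqP-> /eqP->.
    case: (eqVneq i j) => [eij|//]; subst j; by rewrite Lsame ie iF.
  by move=> k; have [c hc] := other k; exists c; rewrite inE.
have cS1 : #|S1| = N.
  rewrite card_split; apply: eq_bigr => i _.
  have -> : [set c : T i | Tagged T c \in S1] = [set~ x0 i].
    by apply/setP => c; rewrite !inE.
  by rewrite cardsC1.
have leN : ldim L <= N by rewrite -cS1; apply: ldim_le.
split.
- move=> hd.
  case: (boolP [forall i, [forall c : T i, [forall d : T i, (c != d) ==> f i c d]]]) => [hall | hnot].
    move=> i; exists (@enum_rank (T i)); split.
      by exists enum_val; [exact: enum_rankK | exact: enum_valK].
    move=> c d; rewrite /complete (inj_eq enum_rank_inj).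
    case: (eqVneq c d) => [->|cd]; first by rewrite iF.
    by move: hall => /forallP/(_ i)/forallP/(_ c)/forallP/(_ d); rewrite cd.
  exfalso; move: hnot; rewrite negb_forall => /existsP [i0].
  rewrite negb_forall => /existsP[c]; rewrite negb_forall => /existsP[d].
  rewrite negb_imply => /andP[cd nf].
  pose S2 := [set v : {i : V & T i} | [&& v != Tagged T c, v != Tagged T d &
     (tag v == i0) || (tagged v != x0 (tag v))]].
  have hS2 : local_resolving L S2.
    apply: resolving_of => //.
      move=> [j a] [j' b]; rewrite !inE /= => ha hb hL.
      apply/negP => /eqP ejj; subst j'.
      move: hL; rewrite /L Lsame ie /=.
      case: (eqVneq j i0) => [eji|nji].
        subst j; rewrite !TaggedE eqxx /= !andbT in ha hb.
        rewrite negb_and !negbK in ha; rewrite negb_and !negbK in hb.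
        case/orP: ha => /eqP->; case/orP: hb => /eqP->; rewrite ?iF //.
        try by rewrite (negbTE nf).
        by rewrite [f i0 d c]sf (negbTE nf).
      rewrite !(Tneq _ _ nji) (negbTE nji) /= negbK in ha.
      rewrite !(Tneq _ _ nji) (negbTE nji) /= negbK in hb.
      by move/eqP: ha => ->; move/eqP: hb => ->; rewrite iF.
    move=> k; case: (eqVneq k i0) => [eki|nki].
      subst k; case: (nef i0) => p [q hpq].
      suff [b hb] : exists b, (b != c) && (b != d).
        by exists b; rewrite inE /= !TaggedE eqxx /= andbT.
      case: (boolP ((p != c) && (p != d))) => hp; first by exists p.
      case: (boolP ((q != c) && (q != d))) => hq; first by exists q.
      exfalso; rewrite negb_and !negbK in hp; rewrite negb_and !negbK in hq.
      case/orP: hp => /eqP ep; case/orP: hq => /eqP eq'; subst p q;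
        rewrite ?iF ?(negbTE nf) // sf (negbTE nf) // in hpq.
    have [b hb] := other k; exists b.
    by rewrite inE !(Tneq _ _ nki) (negbTE nki) /= hb.
  have cS2 : #|S2| < N.
    rewrite card_split /N (bigD1 i0) //= [X in _ < X](bigD1 i0) //=.
    have -> : [set b : T i0 | Tagged T b \in S2] = ~: [set c; d].
      apply/setP => b; rewrite !inE /= !TaggedE eqxx /= andbT.
      by rewrite negb_or.
    have hc2 := cardsC [set c; d]; rewrite cards2 cd in hc2.
    have -> : \sum_(j | j != i0) #|[set b : T j | Tagged T b \in S2]| =
              \sum_(j | j != i0) (#|T j|).-1.
      apply: eq_bigr => j nj.
      have -> : [set b : T j | Tagged T b \in S2] = [set~ x0 j].
        by apply/setP => b; rewrite !inE !(Tneq _ _ nj) (negbTE nj).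
      by rewrite cardsC1.
    rewrite ltn_add2r -hc2 /=; lia.
  have := ldim_le _ _ _ _ _ hS2; rewrite -/L hd => h; have := leq_ltn_trans h cS2; by rewrite ltnn.
- move=> hiso.
  have hc : forall i (p q : T i), p != q -> f i p q.
    move=> i p q.
    have [h [hb hh]] := hiso i; move=> cd.
    by rewrite -hh /complete (inj_eq (bij_inj hb)) cd.
  apply/eqP; rewrite eqn_leq leN /=.
  apply: ldim_ge.
    by rewrite cardW; apply: leq_sum => i _; apply: leq_pred.
  move=> S hS; rewrite card_split; apply: leq_sum => i _.
  set Si := [set c : T i | Tagged T c \in S].
  have h1 : #|~: Si| <= 1.
    rewrite leqNgt; apply/negP => /card_gt1P [c [d [hc' hd' cd]]].
    rewrite !inE in hc' hd'.
    move: hS => /forallP /(_ (Tagged T c)) /forallP /(_ (Tagged T d)).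
    rewrite Lsame (hc _ _ _ cd) orbT /= => /existsP [s /andP[sS hs]].
    have sx : s != Tagged T c by apply: contraTneq sS => ->.
    have sy : s != Tagged T d by apply: contraTneq sS => ->.
    have xy : Tagged T c != Tagged T d by rewrite TaggedE.
    rewrite (dist_twin _ sx sy xy) ?eqxx // in hs.
    apply: sw_auto => //; first exact: Lsym; first exact: Lirr.
    move=> [j b] wx wy; case: (eqVneq j i) => [eji|nji]; last by rewrite !Ldiff.
    subst j; rewrite TaggedE in wx; rewrite TaggedE in wy.
    by rewrite !Lsame !hc ?orbT.
  rewrite -(cardsC Si); move: h1.
  case: #|~: Si| => [|[|]] //= _; by rewrite ?addn0 ?addn1 ?leq_pred.
Qed.
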